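(* If $M$ is an arbitrarily divisible group, then the only recognizable subsets of $M$ are $\emptyset$ and $M$, i.e. $\mathrm{Rec}(M) = \{\emptyset, M\}$.
   Context: A monoid $M$ is arbitrarily divisible if for every $m \in M$ and every positive integer $k$ there exists $m_k \in M$ with $(m_k)^k = m$. A subset $S$ of a monoid $M$ is recognizable if there exist a finite monoid $N$, a monoid morphism $\varphi\colon M \to N$ and a subset $T \subseteq N$ with $S = \varphi^{-1}(T)$. $\mathrm{Rec}(M)$ denotes the set of recognizable subsets of $M$. *)

(* Defs.v *)
From mathcomp Require Import all_boot.
Set Implicit Arguments.
Unset Strict Implicit.
Unset Printing Implicit Defensive.

Record monoid_on (T : Type) := MonoidOn {
  mop : T -> T -> T;
  mone : T;
  massoc : forall x y z, mop x (mop y z) = mop (mop x y) z;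
  mone_l : forall x, mop mone x = x;
  mone_r : forall x, mop x mone = x
}.

Definition is_group (T : Type) (M : monoid_on T) : Prop :=
  forall x, exists y, mop M x y = mone M /\ mop M y x = mone M.

Fixpoint mpow (T : Type) (M : monoid_on T) (x : T) (k : nat) : T :=
  match k with
  | 0 => mone M
  | k'.+1 => mop M x (mpow M x k')
  end.

Definition arbitrarily_divisible (T : Type) (M : monoid_on T) : Prop :=
  forall (m : T) (k : nat), 0 < k -> exists mk : T, mpow M mk k = m.

Definition monoid_morphism (T U : Type) (M : monoid_on T) (N : monoid_on U)
  (phi : T -> U) : Prop :=
  (forall x y, phi (mop M x y) = mop N (phi x) (phi y)) /\ phi (mone M) = mone N.

Definition recognizable (T : Type) (M : monoid_on T) (S : T -> Prop) : Prop :=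
  exists (N : finType) (MN : monoid_on N) (phi : T -> N) (P : N -> Prop),
    monoid_morphism M MN phi /\ (forall x, S x <-> P (phi x)).

(* Main.v *)
Require Import Defs.
From mathcomp Require Import all_boot.
From Stdlib Require Import Classical.

Section Aux.
Variable (U : Type) (N : monoid_on U).

Lemma mpowD (a : U) m n : mpow N a (m + n) = mop N (mpow N a m) (mpow N a n).
Proof.
elim: m => [|m IH] /=; first by rewrite mone_l.
by rewrite IH massoc.
Qed.

Lemma mpowC (a : U) n : mop N a (mpow N a n) = mop N (mpow N a n) a.
Proof.
elim: n => [|n IH] /=; first by rewrite mone_l mone_r.
by rewrite -massoc IH massoc.
Qed.

Lemma mpow_inv (a b : U) n : mop N a b = mone N -> mop N b a = mone N ->
  mop N (mpow N a n) (mpow N b n) = mone N.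
Proof.
move=> ab ba; elim: n => [|n IH] /=; first by rewrite mone_l.
rewrite mpowC -massoc [mop N a (mop N b _)]massoc ab mone_l.
by [].
Qed.

Lemma mpow_one n : mpow N (mone N) n = mone N.
Proof. by elim: n => //= n ->; rewrite mone_l. Qed.

Lemma mpowM (a : U) m n : mpow N a (m * n) = mpow N (mpow N a m) n.
Proof.
elim: n => [|n IH]; first by rewrite muln0.
by rewrite mulnS mpowD IH /=.
Qed.
End Aux.

Lemma period (N : finType) (MN : monoid_on N) (a b : N) :
  mop MN a b = mone MN -> mop MN b a = mone MN ->
  mpow MN a (#|N|)`! = mone MN.
Proof.
move=> ab ba.
pose f := fun i : 'I_(#|N|.+1) => mpow MN a i.
have : ~~ injectiveb f.
  apply/negP => /injectiveP inj; have := leq_card f inj.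
  by rewrite card_ord ltnn.
case/injectivePn => i [j neq eqf].
have key : forall i j : nat, i < j -> j <= #|N| -> mpow MN a i = mpow MN a j ->
    mpow MN a (#|N|)`! = mone MN.
  move=> i' j' lt le heq.
  have hd : mpow MN a (j' - i') = mone MN.
    move: heq; rewrite -(subnK (ltnW lt)) mpowD => heq.
    have := f_equal (fun z => mop MN z (mpow MN b i')) heq.
    rewrite /= mpow_inv // -massoc mpow_inv // mone_r. move=> H. by rewrite addnK H.
  have : (j' - i') %| (#|N|)`!.
    apply: dvdn_fact; apply/andP; split; first by rewrite subn_gt0.
    exact: leq_trans (leq_subr _ _) le.
  case/dvdnP => q ->.
  by rewrite mulnC mpowM hd mpow_one.
rewrite /f in eqf.
case: (ltngtP i j) => h.
- by apply: (key i j) => //; rewrite -ltnS.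
- by apply: (key j i) => //; rewrite -ltnS.
- by move: neq; rewrite (val_inj h) eqxx.
Qed.

Theorem proposition3 (T : Type) (M : monoid_on T) :
  is_group M -> arbitrarily_divisible M ->
  forall S : T -> Prop, recognizable M S ->
    (forall x, ~ S x) \/ (forall x, S x).
Proof.
move=> grp div S [N [MN [phi [P [[phiM phi1] hS]]]]].
have triv : forall x, phi x = mone MN.
  move=> x.
  have [y hy] := div x (#|N|)`! (fact_gt0 _).
  have [z [yz zy]] := grp y.
  have phipow : forall k, phi (mpow M y k) = mpow MN (phi y) k.
    by elim=> [|k IH] //=; rewrite phiM IH.
  rewrite -hy phipow; apply: (@period N MN _ (phi z)).
  - by rewrite -phiM yz.
  - by rewrite -phiM zy.
have [p|np] := (Classical_Prop.classic (P (mone MN))).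
- by right=> x; apply/hS; rewrite triv.
- by left=> x /hS; rewrite triv.
Qed.
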